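(* Let $A$ be a unital C*-algebra and let $pMO(A)$ be the locale presented by the site $\mathcal{C}(A)\ltimes\Sigma$ described in the context. Then the points of $pMO(A)$ are in one-to-one correspondence with the consistent ideals of partial measurement outcomes of $A$. Explicitly: a point $\tau$ (completely prime filter) corresponds to the family indexed by $I_\tau=\{C\in\mathcal{C}(A) : (C,\Sigma(C))\in\tau\}$, where for $C\in I_\tau$ the character $\sigma_C\in\Sigma(C)$ is the unique character with $\{u : (C,u)\in\tau\}=\{u\in\mathcal{O}(\Sigma(C)) : \sigma_C\in u\}$; conversely, a consistent ideal $(C_i,\sigma_i)_{i}$ corresponds to the point $\{(C_i,u) : \sigma_i\in u\}$.
   Context: Work classically in Sets. $A$ is a unital C*-algebra; $\mathcal{C}(A)$ denotes the set of commutative unital C*-subalgebras of $A$, partially ordered by inclusion. For $C\in\mathcal{C}(A)$, $\Sigma(C)$ is its Gelfand spectrum (the compact Hausdorff space of characters of $C$) and $\mathcal{O}(\Sigma(C))$ its lattice of open sets. For $C\subseteq D$ in $\mathcal{C}(A)$, $r_{D,C}:\Sigma(D)\to\Sigma(C)$ is restriction of characters (continuous). The site $\mathcal{C}(A)\ltimes\Sigma$: objects are pairs $(C,u)$ with $C\in\mathcal{C}(A)$, $u\in\mathcal{O}(\Sigma(C))$; order $(D,v)\le(C,u)$ iff $C\subseteq D$ and $v\subseteq r_{D,C}^{-1}(u)$; covering relation $(C,u)\lhd\{(D_i,v_i)\}_{i\in I}$ iff $C\subseteq D_i$ for all $i$ and $u\subseteq\bigcup\{v_i : i\in I, D_i=C\}$.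 The locale presented by such a site has as frame the down-closed subsets $U$ of the poset such that $x\lhd S\subseteq U$ implies $x\in U$. A point of it is a completely prime filter: an inhabited, up-closed subset $\tau$ such that any two elements of $\tau$ have a common lower bound in $\tau$, and whenever $x\in\tau$ and $x\lhd S$ then $S\cap\tau\neq\emptyset$. A partial measurement outcome is a pair $(C,\sigma)$ with $C\in\mathcal{C}(A)$ and $\sigma\in\Sigma(C)$. A consistent ideal of partial measurement outcomes is a family $(C_i,\sigma_i)_{i}$ of partial measurement outcomes such that $\{C_i\}$ is an ideal of $\mathcal{C}(A)$ (nonempty, down-closed, and directed under inclusion), each $C_i$ occurs with exactly one $\sigma_i$, and $C_i\subseteq C_j$ implies $\sigma_i=\sigma_j|_{C_i}$. *)

(* Defs.v *)
From Stdlib Require Import Reals List.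
Open Scope R_scope.

Record Cplx := mkC { Cre : R ; Cim : R }.
Definition C0 : Cplx := mkC 0 0.
Definition C1 : Cplx := mkC 1 0.
Definition Cadd (z w : Cplx) : Cplx := mkC (Cre z + Cre w) (Cim z + Cim w).
Definition Copp (z : Cplx) : Cplx := mkC (- Cre z) (- Cim z).
Definition Csub (z w : Cplx) : Cplx := Cadd z (Copp w).
Definition Cmul (z w : Cplx) : Cplx :=
  mkC (Cre z * Cre w - Cim z * Cim w) (Cre z * Cim w + Cim z * Cre w).
Definition Cconj (z : Cplx) : Cplx := mkC (Cre z) (- Cim z).
Definition Cabs (z : Cplx) : R := sqrt (Cre z * Cre z + Cim z * Cim z).

Record CStarAlg := {
  car :> Type;
  zero : car; one : car;
  add : car -> car -> car; opp : car -> car; mul : car -> car -> car;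
  smul : Cplx -> car -> car; star : car -> car; norm : car -> R;
  addA : forall x y z, add x (add y z) = add (add x y) z;
  addC : forall x y, add x y = add y x;
  add0 : forall x, add zero x = x;
  addN : forall x, add (opp x) x = zero;
  smulA : forall a b x, smul a (smul b x) = smul (Cmul a b) x;
  smul1 : forall x, smul C1 x = x;
  smulDr : forall a x y, smul a (add x y) = add (smul a x) (smul a y);
  smulDl : forall a b x, smul (Cadd a b) x = add (smul a x) (smul b x);
  mulA : forall x y z, mul x (mul y z) = mul (mul x y) z;
  mul1l : forall x, mul one x = x;
  mul1r : forall x, mul x one = x;
  mulDl : forall x y z, mul (add x y) z = add (mul x z) (mul y z);
  mulDr : forall x y z, mul x (add y z) = add (mul x y) (mul x z);
  smulMl : forall a x y, smul a (mul x y) = mul (smul a x) y;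
  smulMr : forall a x y, smul a (mul x y) = mul x (smul a y);
  starK : forall x, star (star x) = x;
  starD : forall x y, star (add x y) = add (star x) (star y);
  starZ : forall a x, star (smul a x) = smul (Cconj a) (star x);
  starM : forall x y, star (mul x y) = mul (star y) (star x);
  norm_ge0 : forall x, 0 <= norm x;
  norm_eq0 : forall x, norm x = 0 -> x = zero;
  normZ : forall a x, norm (smul a x) = Cabs a * norm x;
  normD : forall x y, norm (add x y) <= norm x + norm y;
  normM : forall x y, norm (mul x y) <= norm x * norm y;
  cstar_id : forall x, norm (mul (star x) x) = norm x * norm x;
  complete : forall s : nat -> car,
    (forall eps, 0 < eps -> exists N, forall m n, (N <= m)%nat -> (N <= n)%nat ->
        norm (add (s m) (opp (s n))) < eps) ->
    exists l, forall eps, 0 < eps -> exists N, forall n, (N <= n)%nat ->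
        norm (add (s n) (opp l)) < eps
}.

Arguments zero {c}. Arguments one {c}. Arguments add {c}. Arguments opp {c}.
Arguments mul {c}. Arguments smul {c}. Arguments star {c}. Arguments norm {c}.

Definition is_comm_sub (A : CStarAlg) (C : A -> Prop) : Prop :=
  C one /\
  (forall x y, C x -> C y -> C (add x y)) /\
  (forall a x, C x -> C (smul a x)) /\
  (forall x y, C x -> C y -> C (mul x y)) /\
  (forall x, C x -> C (star x)) /\
  (forall (s : nat -> A) l, (forall n, C (s n)) ->
     (forall eps, 0 < eps -> exists N, forall n, (N <= n)%nat ->
         norm (add (s n) (opp l)) < eps) -> C l) /\
  (forall x y, C x -> C y -> mul x y = mul y x).

Definition subset {A : CStarAlg} (C D : A -> Prop) : Prop := forall x, C x -> D x.

Definition is_char (A : CStarAlg) (C : A -> Prop) (s : sig C -> Cplx) : Prop :=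
  (forall x y z : sig C, proj1_sig z = add (proj1_sig x) (proj1_sig y) ->
      s z = Cadd (s x) (s y)) /\
  (forall (a : Cplx) (x z : sig C), proj1_sig z = smul a (proj1_sig x) ->
      s z = Cmul a (s x)) /\
  (forall x y z : sig C, proj1_sig z = mul (proj1_sig x) (proj1_sig y) ->
      s z = Cmul (s x) (s y)) /\
  (exists x, s x <> C0).

Definition Spec (A : CStarAlg) (C : A -> Prop) : (sig C -> Cplx) -> Prop :=
  is_char A C.

(* Open subsets of Sigma(C) for the Gelfand (weak-* ) topology:
   subsets of Sigma(C) that are neighbourhoods of each of their points,
   basic neighbourhoods being
   { t in Sigma(C) | |t(x_i) - s(x_i)| < eps for finitely many x_i }. *)
Definition is_open (A : CStarAlg) (C : A -> Prop) (u : (sig C -> Cplx) -> Prop) : Prop :=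
  (forall s, u s -> is_char A C s) /\
  (forall s, u s -> exists (l : list (sig C)) (eps : R), 0 < eps /\
     forall t, is_char A C t ->
       (forall x, In x l -> Cabs (Csub (t x) (s x)) < eps) -> u t).

Definition restr {A : CStarAlg} {C D : A -> Prop} (h : subset C D)
  (t : sig D -> Cplx) : sig C -> Cplx :=
  fun x => t (exist D (proj1_sig x) (h (proj1_sig x) (proj2_sig x))).

Record sobj (A : CStarAlg) := SObj { so_C : A -> Prop ; so_u : (sig so_C -> Cplx) -> Prop }.
Arguments SObj {A}. Arguments so_C {A}. Arguments so_u {A}.

Definition valid_obj (A : CStarAlg) (x : sobj A) : Prop :=
  is_comm_sub A (so_C x) /\ is_open A (so_C x) (so_u x).

Definition sle (A : CStarAlg) (y x : sobj A) : Prop :=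
  exists h : subset (so_C x) (so_C y),
    forall t, so_u y t -> so_u x (restr h t).

(* x ◁ S  iff  C ⊆ D for all (D,v) in S, and u ⊆ ⋃ { v : (D,v) ∈ S, D = C }
   (given C ⊆ D, the extra inclusion D ⊆ C expresses D = C, and the
   restriction along it is the identification Σ(C) = Σ(D)). *)
Definition covers (A : CStarAlg) (x : sobj A) (S : sobj A -> Prop) : Prop :=
  valid_obj A x /\ (forall y, S y -> valid_obj A y) /\
  (forall y, S y -> subset (so_C x) (so_C y)) /\
  (forall s, so_u x s -> exists y, S y /\
     exists h : subset (so_C y) (so_C x), so_u y (restr h s)).

Definition is_point (A : CStarAlg) (tau : sobj A -> Prop) : Prop :=
  (forall x, tau x -> valid_obj A x) /\
  (exists x, tau x) /\
  (forall x y, tau y -> valid_obj A x -> sle A y x -> tau x) /\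
  (forall x y, tau x -> tau y -> exists z, tau z /\ sle A z x /\ sle A z y) /\
  (forall x S, tau x -> covers A x S -> exists y, S y /\ tau y).

Record pmo (A : CStarAlg) := PMO { pm_C : A -> Prop ; pm_s : sig pm_C -> Cplx }.
Arguments PMO {A}. Arguments pm_C {A}. Arguments pm_s {A}.

Definition valid_pmo (A : CStarAlg) (p : pmo A) : Prop :=
  is_comm_sub A (pm_C p) /\ is_char A (pm_C p) (pm_s p).

(* A consistent ideal of partial measurement outcomes, as the set F of its
   members (C_i, sigma_i). *)
Definition consistent_ideal (A : CStarAlg) (F : pmo A -> Prop) : Prop :=
  (forall p, F p -> valid_pmo A p) /\
  (exists p, F p) /\
  (forall p (C : A -> Prop), F p -> is_comm_sub A C -> subset C (pm_C p) ->
     exists q, F q /\ (forall a, pm_C q a <-> C a)) /\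
  (forall p q, F p -> F q -> exists r, F r /\
     subset (pm_C p) (pm_C r) /\ subset (pm_C q) (pm_C r)) /\
  (* each C_i occurs with exactly one sigma_i *)
  (forall p q, F p -> F q -> forall (h : subset (pm_C p) (pm_C q)),
     subset (pm_C q) (pm_C p) -> pm_s p = restr h (pm_s q)) /\
  (forall p q, F p -> F q -> forall (h : subset (pm_C p) (pm_C q)),
     pm_s p = restr h (pm_s q)).

Definition point_to_ideal (A : CStarAlg) (tau : sobj A -> Prop) : pmo A -> Prop :=
  fun p => tau (SObj (pm_C p) (Spec A (pm_C p))) /\
    is_char A (pm_C p) (pm_s p) /\
    (forall u, is_open A (pm_C p) u ->
       (tau (SObj (pm_C p) u) <-> u (pm_s p))).

Definition ideal_to_point (A : CStarAlg) (F : pmo A -> Prop) : sobj A -> Prop :=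
  fun x => is_open A (so_C x) (so_u x) /\
    exists s, F (PMO (so_C x) s) /\ so_u x s.

(* Main.v *)
Require Import Defs.
From Stdlib Require Import Reals List Lra Classical FunctionalExtensionality PropExtensionality.
Open Scope R_scope.

Lemma restr_pi (A:CStarAlg) (C D : A -> Prop) (h1 h2 : subset C D) t :
  restr h1 t = restr h2 t.
Proof. rewrite (proof_irrelevance _ h1 h2). reflexivity. Qed.

Lemma restr_id (A:CStarAlg) (C : A -> Prop) (h : subset C C) (t : sig C -> Cplx) : restr h t = t.
Proof.
  apply functional_extensionality; intros [x hx]; unfold restr; simpl.
  rewrite (proof_irrelevance _ (h x hx) hx). reflexivity.
Qed.

Lemma Cmul0 w : Cmul C0 w = C0.
Proof. unfold Cmul, C0; simpl. f_equal; ring. Qed.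

Lemma char_one (A:CStarAlg) (C : A -> Prop) s (H1 : C one) :
  is_char A C s -> s (exist C one H1) <> C0.
Proof.
  intros (_ & _ & Hm & [x0 Hx0]) E.
  apply Hx0. rewrite (Hm (exist C one H1) x0 x0).
  - rewrite E. apply Cmul0.
  - simpl. symmetry. apply mul1l.
Qed.

Lemma char_restr (A:CStarAlg) (C D : A -> Prop) (h : subset C D) t :
  C one -> is_char A D t -> is_char A C (restr h t).
Proof.
  intros H1 Ht. pose proof (char_one A D t (h _ H1) Ht) as Hn.
  destruct Ht as (Ha & Hs & Hm & _).
  unfold restr; split; [|split; [|split]].
  - intros x y z E. apply Ha. simpl. exact E.
  - intros a x z E. apply Hs. simpl; exact E.
  - intros x y z E. apply Hm. simpl; exact E.
  - exists (exist C one H1). simpl. exact Hn.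
Qed.

Lemma open_spec (A:CStarAlg) (C : A -> Prop) : is_open A C (Spec A C).
Proof. split. - intros s H; exact H. - intros s _. exists nil, 1. split; [lra|]. intros t Ht _. exact Ht. Qed.

Lemma open_inter (A:CStarAlg) (C : A -> Prop) u v : is_open A C u -> is_open A C v -> is_open A C (fun t => u t /\ v t).
Proof.
  intros [Hu1 Hu2] [Hv1 Hv2]. split.
  - intros s [H _]. auto.
  - intros s [Hs1 Hs2]. destruct (Hu2 s Hs1) as (l1 & e1 & He1 & H1).
    destruct (Hv2 s Hs2) as (l2 & e2 & He2 & H2).
    exists (l1 ++ l2), (Rmin e1 e2). split. { apply Rmin_glb_lt; auto. }
    intros t Ht Hc. split.
    + apply H1; auto. intros x Hx. eapply Rlt_le_trans. apply Hc. apply in_or_app; auto. apply Rmin_l.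
    + apply H2; auto. intros x Hx. eapply Rlt_le_trans. apply Hc. apply in_or_app; auto. apply Rmin_r.
Qed.

Lemma open_preimage (A:CStarAlg) (C D : A -> Prop) (h : subset C D) u :
  C one -> is_open A C u -> is_open A D (fun t => is_char A D t /\ u (restr h t)).
Proof.
  intros H1 [Hu1 Hu2]. split.
  - intros s [H _]; exact H.
  - intros s [Hs Hus]. destruct (Hu2 _ Hus) as (l & e & He & Hl).
    exists (map (fun x : sig C => exist D (proj1_sig x) (h _ (proj2_sig x))) l), e.
    split; auto. intros t Ht Hc. split; auto.
    apply Hl. apply char_restr; auto.
    intros x Hx. unfold restr. apply (Hc (exist D (proj1_sig x) (h _ (proj2_sig x)))).
    apply (in_map (fun x : sig C => exist D (proj1_sig x) (h _ (proj2_sig x)))). exact Hx.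
Qed.

Lemma abs_re_le a b : Rabs a <= sqrt (a*a + b*b).
Proof. rewrite <- sqrt_Rsqr_abs. apply sqrt_le_1_alt. unfold Rsqr. nra. Qed.

Lemma ball_open (A:CStarAlg) (C : A -> Prop) (f : Cplx -> R)
  (Hf1 : forall z w, f (Csub z w) = f z - f w)
  (Hf2 : forall z, Rabs (f z) <= Cabs z) x c d :
  is_open A C (fun t => is_char A C t /\ Rabs (f (t x) - c) < d).
Proof.
  split. - intros s [H _]; exact H.
  - intros s [Hs Hd]. exists (x :: nil), (d - Rabs (f (s x) - c)). split. lra.
    intros t Ht Hc. split; auto. specialize (Hc x (or_introl eq_refl)).
    pose proof (Hf2 (Csub (t x) (s x))) as H. rewrite Hf1 in H.
    pose proof (Rabs_triang (f (t x) - f (s x)) (f (s x) - c)) as H0.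
    replace (f (t x) - f (s x) + (f (s x) - c)) with (f (t x) - c) in H0 by ring. lra.
Qed.

Lemma sep_gen (A:CStarAlg) (C : A -> Prop) (f : Cplx -> R)
  (Hf1 : forall z w, f (Csub z w) = f z - f w)
  (Hf2 : forall z, Rabs (f z) <= Cabs z) a b x :
  is_char A C a -> is_char A C b -> f (a x) <> f (b x) ->
  exists V W, is_open A C V /\ is_open A C W /\ V a /\ W b /\ forall t, V t -> W t -> False.
Proof.
  intros Ha Hb Hne.
  assert (Hd : 0 < Rabs (f (a x) - f (b x))) by (apply Rabs_pos_lt; lra).
  set (d := Rabs (f (a x) - f (b x)) / 2).
  exists (fun t => is_char A C t /\ Rabs (f (t x) - f (a x)) < d),
         (fun t => is_char A C t /\ Rabs (f (t x) - f (b x)) < d).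
  split; [apply ball_open; auto|]. split; [apply ball_open; auto|].
  split; [split; auto; unfold d; rewrite Rminus_diag, Rabs_R0; lra|].
  split; [split; auto; unfold d; rewrite Rminus_diag, Rabs_R0; lra|].
  intros t [_ H1] [_ H2]. unfold d in *.
  pose proof (Rabs_triang (f (a x) - f (t x)) (f (t x) - f (b x))) as H0.
  replace (f (a x) - f (t x) + (f (t x) - f (b x))) with (f (a x) - f (b x)) in H0 by ring.
  rewrite Rabs_minus_sym in H1. lra.
Qed.

Lemma sep (A:CStarAlg) (C : A -> Prop) a b : is_char A C a -> is_char A C b -> a <> b ->
  exists V W, is_open A C V /\ is_open A C W /\ V a /\ W b /\ forall t, V t -> W t -> False.
Proof.
  intros Ha Hb Hne.
  assert (exists x, a x <> b x) as [x Hx].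
  { apply not_all_ex_not. intro H. apply Hne. apply functional_extensionality. exact H. }
  destruct (classic (Cre (a x) = Cre (b x))) as [Er|Nr].
  - destruct (classic (Cim (a x) = Cim (b x))) as [Ei|Ni].
    + exfalso. apply Hx. destruct (a x), (b x); simpl in *; congruence.
    + refine (sep_gen A C Cim _ _ a b x Ha Hb Ni).
      * intros z w. unfold Csub, Cadd, Copp; simpl; ring.
      * intros z. unfold Cabs. rewrite Rplus_comm. apply abs_re_le.
  - refine (sep_gen A C Cre _ _ a b x Ha Hb Nr).
    + intros z w. unfold Csub, Cadd, Copp; simpl; ring.
    + intros z. unfold Cabs. apply abs_re_le.
Qed.

Lemma pt_up_same (A:CStarAlg) tau (C : A -> Prop) u v : is_point A tau -> tau (SObj C u) ->
  is_open A C v -> (forall t, u t -> v t) -> tau (SObj C v).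
Proof.
  intros Hp Hu Hv Huv. destruct Hp as (Hval & _ & Hup & _ & _).
  apply (Hup _ (SObj C u)); auto.
  - split; [apply (proj1 (Hval _ Hu)) | exact Hv].
  - exists (fun a ha => ha). simpl. intros t Ht. rewrite restr_id. auto.
Qed.

Lemma pt_empty (A:CStarAlg) tau (C : A -> Prop) V W : is_point A tau -> tau (SObj C V) -> tau (SObj C W) ->
  (forall t, V t -> W t -> False) -> False.
Proof.
  intros Hp HV HW Hd. destruct Hp as (Hval & _ & _ & Hfil & Hcp).
  destruct (Hfil _ _ HV HW) as (z & Hz & [h1 H1] & [h2 H2]).
  destruct (Hcp z (fun _ => False) Hz) as (y & [] & _).
  split; [apply Hval; exact Hz|]. split; [intros y []|]. split; [intros y []|].
  intros s Hs. exfalso. pose proof (proof_irrelevance _ h1 h2) as E. subst h2.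
  apply (Hd (restr h1 s)). apply H1, Hs. apply H2, Hs.
Qed.

Lemma pt_exists (A:CStarAlg) tau (C : A -> Prop) : is_point A tau -> tau (SObj C (Spec A C)) ->
  exists s, is_char A C s /\ forall u, is_open A C u -> (tau (SObj C u) <-> u s).
Proof.
  intros Hp HS. pose proof Hp as (Hval & _ & _ & _ & Hcp).
  assert (HC : is_comm_sub A C) by exact (proj1 (Hval _ HS)).
  assert (St1 : exists s, is_char A C s /\ forall u, is_open A C u -> u s -> tau (SObj C u)).
  { apply NNPP. intro Hn.
    destruct (Hcp _ (fun y => exists u, y = SObj C u /\ is_open A C u /\ ~ tau (SObj C u)) HS)
      as (y & (u & -> & Hu & Hnt) & Hy).
    - split; [split; [exact HC | apply open_spec]|].
      split; [intros y (u & -> & Hu & _); split; [exact HC|exact Hu]|].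
      split; [intros y (u & -> & _); intros a ha; exact ha|].
      intros s Hs. simpl in Hs.
      destruct (classic (exists u, is_open A C u /\ u s /\ ~ tau (SObj C u))) as [(u & Hu & Hus & Hnt)|Hno].
      + exists (SObj C u). split. { exists u; auto. } exists (fun a ha => ha). simpl. rewrite restr_id. exact Hus.
      + exfalso. apply Hn. exists s. split; [exact Hs|]. intros u Hu Hus. apply NNPP. intro Hnt. apply Hno. exists u; auto.
    - exact (Hnt Hy). }
  destruct St1 as (s & Hs & Hs1). exists s. split; [exact Hs|]. intros u Hu. split; [|apply Hs1; auto].
  intro Htu. apply NNPP. intro Hnu.
  destruct (Hcp _ (fun y => exists w, y = SObj C w /\ is_open A C w /\ exists V, is_open A C V /\ V s /\ forall t, V t -> w t -> False) Htu)
    as (y & (w & -> & Hw & V & HV & HVs & Hd) & Hy).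
  - split; [split; [exact HC|exact Hu]|].
    split; [intros y (w & -> & Hw & _); split; [exact HC|exact Hw]|].
    split; [intros y (w & -> & _); intros a ha; exact ha|].
    intros t Ht. simpl in Ht.
    assert (Hne : t <> s) by (intro E; subst; contradiction).
    destruct (sep A C t s (proj1 Hu t Ht) Hs Hne) as (W & V & HW & HV & HWt & HVs & Hd).
    exists (SObj C (fun r => u r /\ W r)). split.
    + exists (fun r => u r /\ W r). split; [reflexivity|]. split; [apply open_inter; auto|].
      exists V. split; [auto|split; [auto|]]. intros r Hr [_ Hr']. exact (Hd r Hr' Hr).
    + exists (fun a ha => ha). simpl. rewrite restr_id. auto.
  - apply (pt_empty A tau C V w Hp); auto.
Qed.

Lemma pt_unique (A:CStarAlg) tau (C : A -> Prop) s1 s2 : is_char A C s1 -> is_char A C s2 ->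
  (forall u, is_open A C u -> (tau (SObj C u) <-> u s1)) ->
  (forall u, is_open A C u -> (tau (SObj C u) <-> u s2)) -> s1 = s2.
Proof.
  intros Hc1 Hc2 H1 H2. apply NNPP; intro Hne.
  destruct (sep A C s1 s2 Hc1 Hc2 Hne) as (V & W & HV & HW & HV1 & HW2 & Hd).
  apply (Hd s2); auto. apply (H2 V HV), (H1 V HV), HV1.
Qed.

Lemma pt_compat (A:CStarAlg) tau (D E : A -> Prop) (h : subset E D) sD sE :
  is_point A tau -> is_comm_sub A E -> is_char A D sD -> is_char A E sE ->
  (forall u, is_open A D u -> (tau (SObj D u) <-> u sD)) ->
  (forall u, is_open A E u -> (tau (SObj E u) <-> u sE)) ->
  restr h sD = sE.
Proof.
  intros Hp HE HD HE' H1 H2. apply NNPP; intro Hne.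
  destruct (sep A E _ _ (char_restr A E D h sD (proj1 HE) HD) HE' Hne) as (V & W & HV & HW & HVa & HWb & Hd).
  apply (pt_empty A tau E V W Hp).
  - pose proof Hp as (Hval & _ & Hup & _ & _).
    apply (Hup _ (SObj D (fun t => is_char A D t /\ V (restr h t)))).
    + apply H1. apply open_preimage; auto. exact (proj1 HE). split; auto.
    + split; [exact HE | exact HV].
    + exists h. simpl. intros t [_ Ht]. exact Ht.
  - apply H2; auto.
  - exact Hd.
Qed.

Lemma F_restr (A:CStarAlg) F p (C : A -> Prop) : consistent_ideal A F -> F p -> is_comm_sub A C ->
  forall h : subset C (pm_C p), F (PMO C (restr h (pm_s p))).
Proof.
  intros HF Hp HC h. destruct HF as (_ & _ & Hdown & _ & _ & Hcons).
  destruct (Hdown p C Hp HC h) as ([Cq sq] & Hq & Heq). simpl in Heq.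
  assert (Cq = C) by (apply functional_extensionality; intro a; apply propositional_extensionality; apply Heq).
  subst Cq. pose proof (Hcons _ _ Hq Hp h) as E. simpl in E. rewrite E in Hq. exact Hq.
Qed.

Lemma F_uniq (A:CStarAlg) F (C : A -> Prop) s1 s2 : consistent_ideal A F ->
  F (PMO C s1) -> F (PMO C s2) -> s1 = s2.
Proof.
  intros HF H1 H2. destruct HF as (_ & _ & _ & _ & _ & Hcons).
  pose proof (Hcons _ _ H1 H2 (fun a ha => ha)) as E. simpl in E. rewrite restr_id in E. exact E.
Qed.

Theorem theorem4p3 (A : CStarAlg) :
  (forall tau : sobj A -> Prop, is_point A tau ->
     (forall C : A -> Prop, tau (SObj C (Spec A C)) ->
        exists! s : sig C -> Cplx, is_char A C s /\
          (forall u, is_open A C u -> (tau (SObj C u) <-> u s))) /\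
     consistent_ideal A (point_to_ideal A tau) /\
     (forall x, ideal_to_point A (point_to_ideal A tau) x <-> tau x)) /\
  (forall F : pmo A -> Prop, consistent_ideal A F ->
     is_point A (ideal_to_point A F) /\
     (forall p, point_to_ideal A (ideal_to_point A F) p <-> F p)).
Proof.
  split.
  - intros tau Hp.
    pose proof Hp as (Hval & Hinh & Hup & Hfil & Hcp).
    assert (Hspec : forall x, tau x -> tau (SObj (so_C x) (Spec A (so_C x)))).
    { intros [C u] Hx. apply (pt_up_same A tau C u); auto; [apply open_spec|].
      intros t Ht. exact (proj1 (proj2 (Hval _ Hx)) t Ht). }
    split.
    { intros C HC. destruct (pt_exists A tau C Hp HC) as (s & Hs & Hsu). exists s. split; [auto|].
      intros s' [Hs' Hsu']. apply (pt_unique A tau C s s'); auto. }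
    split.
    + unfold consistent_ideal, point_to_ideal. split; [|split; [|split; [|split; [|split]]]].
      * intros p (HS & Hc & _). split; [exact (proj1 (Hval _ HS))|exact Hc].
      * destruct Hinh as [[C u] Hx]. pose proof (Hspec _ Hx) as HS. simpl in HS.
        destruct (pt_exists A tau C Hp HS) as (s & Hs & Hsu). exists (PMO C s). simpl. auto.
      * intros p C (HS & Hc & Hsu) HC h.
        assert (HS' : tau (SObj C (Spec A C))).
        { apply (Hup _ _ HS).
          - split; [exact HC|apply open_spec].
          - exists h. simpl. intros t Ht. apply char_restr; auto. exact (proj1 HC). }
        destruct (pt_exists A tau C Hp HS') as (s & Hs & Hsu'). exists (PMO C s). simpl.
        split; [auto|]. intro a; tauto.
      * intros p q (HSp & _) (HSq & _).
        destruct (Hfil _ _ HSp HSq) as ([Cz uz] & Hz & [h1 _] & [h2 _]).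
        pose proof (Hspec _ Hz) as HS. simpl in HS, h1, h2.
        destruct (pt_exists A tau Cz Hp HS) as (s & Hs & Hsu). exists (PMO Cz s). simpl. auto.
      * intros p q (HSp & Hcp' & Hup') (HSq & Hcq & Huq) h _. symmetry.
        apply (pt_compat A tau (pm_C q) (pm_C p) h); auto. exact (proj1 (Hval _ HSp)).
      * intros p q (HSp & Hcp' & Hup') (HSq & Hcq & Huq) h. symmetry.
        apply (pt_compat A tau (pm_C q) (pm_C p) h); auto. exact (proj1 (Hval _ HSp)).
    + intros [C u]. unfold ideal_to_point, point_to_ideal; simpl. split.
      * intros (Hu & s & (HS & Hc & Hsu) & Hus). simpl in *. apply Hsu; auto.
      * intros Hx. pose proof (Hspec _ Hx) as HS. simpl in HS.
        destruct (pt_exists A tau C Hp HS) as (s & Hs & Hsu).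
        pose proof (proj2 (Hval _ Hx)) as Hu. simpl in Hu.
        split; [exact Hu|]. exists s. split; [split; [exact HS|split; auto]|]. apply Hsu; auto.
  - intros F HF. pose proof HF as (Hv & Hne & Hdown & Hdir & Huniq & Hcons).
    split.
    + unfold is_point, ideal_to_point. split; [|split; [|split; [|split]]].
      * intros [C u] (Hu & s & Hs & _). split; [exact (proj1 (Hv _ Hs))|exact Hu].
      * destruct Hne as [[C s] Hp]. exists (SObj C (Spec A C)). simpl. split; [apply open_spec|].
        exists s. split; auto. exact (proj2 (Hv _ Hp)).
      * intros [C u] [D v] (Hv' & s & Hs & Hvs) Hx [h Hh]. simpl in *. split; [exact (proj2 Hx)|].
        exists (restr h s). split.
        -- exact (F_restr A F (PMO D s) C HF Hs (proj1 Hx) h).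
        -- apply Hh; auto.
      * intros [C u] [C' u'] (Hu & s & Hs & Hus) (Hu' & s' & Hs' & Hus'). simpl in *.
        destruct (Hdir _ _ Hs Hs') as ([D r] & Hr & h1 & h2). simpl in h1, h2.
        exists (SObj D (fun t => (is_char A D t /\ u (restr h1 t)) /\ (is_char A D t /\ u' (restr h2 t)))).
        simpl. split; [split|split].
        -- apply open_inter; apply open_preimage; auto.
           ++ exact (proj1 (proj1 (Hv _ Hs))).
           ++ exact (proj1 (proj1 (Hv _ Hs'))).
        -- exists r. split; [exact Hr|].
           pose proof (proj2 (Hv _ Hr)) as Hcr. simpl in Hcr.
           pose proof (Hcons _ _ Hs Hr h1) as E1. pose proof (Hcons _ _ Hs' Hr h2) as E2.
           simpl in E1, E2. rewrite <- E1, <- E2. auto.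
        -- exists h1. simpl. intros t [[_ H] _]. exact H.
        -- exists h2. simpl. intros t [_ [_ H]]. exact H.
      * intros [C u] S (Hu & s & Hs & Hus) Hcov. destruct Hcov as (_ & HvS & _ & Hc).
        destruct (Hc s Hus) as (y & Hy & h & Hyh). exists y. split; auto.
        pose proof (HvS _ Hy) as Hvy. destruct y as [Cy uy]; simpl in *.
        split; [exact (proj2 Hvy)|]. exists (restr h s). split; [|exact Hyh].
        exact (F_restr A F (PMO C s) Cy HF Hs (proj1 Hvy) h).
    + intros [C s]. unfold point_to_ideal, ideal_to_point; simpl. split.
      * intros ((HSo & s' & Hs' & Hs'c) & Hc & Hiff).
        apply NNPP; intro Hn. assert (Hne' : s <> s') by (intro E; subst; auto).
        destruct (sep A C s s' Hc Hs'c Hne') as (V & W & HV & HW & HVs & HWs & Hd).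
        destruct (proj2 (Hiff V HV) HVs) as (_ & s'' & Hs'' & HVs'').
        rewrite (F_uniq A F C s'' s' HF Hs'' Hs') in HVs''. exact (Hd s' HVs'' HWs).
      * intros Hp. pose proof (Hv _ Hp) as (HC & Hc). simpl in HC, Hc.
        split; [split; [apply open_spec|exists s; auto]|]. split; [exact Hc|].
        intros u Hu. split.
        -- intros (_ & s' & Hs' & Hus'). rewrite (F_uniq A F C s s' HF Hp Hs'). exact Hus'.
        -- intros Hus. split; [exact Hu|]. exists s; auto.
Qed.
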